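(* Let $p$ be a prime number and $n\in\mathbb{N}$, $n\ge 1$. Then there exists a bijection between the set $W_p^n$ and the orbit set $(\mathbb{Z}_p\times\mathbb{Z}_p)^n/\mathrm{SL}(2,\mathbb{Z})$.
   Context: Consider the alphabet of $p^2$ letters $\{0,1,\dots,p^2-1\}$. $W_p^n$ is the set of words $a_1a_2\dots a_n$ of length $n$ over this alphabet consisting of the all-zero word $00\dots0$ together with all words for which there exist integers $j,k$ with $1\le j<k\le n+1$ such that: (R1) $a_i=0$ for $i<j$; (R2) $a_j=1$; (R3) $a_i\in\{0,1,\dots,p-1\}$ for $j<i<k$; (R4) if $k\le n$ then $a_k\in\{p,2p,\dots,(p-1)p\}$; (R5) if $k<n$ then $a_i\in\{0,1,\dots,p^2-1\}$ for $i>k$. The group $\mathrm{SL}(2,\mathbb{Z})$ acts on the left on $(\mathbb{Z}_p\times\mathbb{Z}_p)^n$, whose elements are viewed as $2\times n$ matrices $\binom{u}{v}$ with rows $u,v\in\mathbb{Z}_p^n$, by matrix multiplication with entries reduced modulo $p$; $(\mathbb{Z}_p\times\mathbb{Z}_p)^n/\mathrm{SL}(2,\mathbb{Z})$ denotes the set of orbits of this action. *)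

(* Defs.v *)
From HB Require Import structures.
From mathcomp Require Import all_boot all_order all_algebra.
From mathcomp Require Import boolp.
Set Implicit Arguments. Unset Strict Implicit. Unset Printing Implicit Defensive.
Import GRing.Theory.
Local Open Scope ring_scope.

(* Words of length n over the alphabet {0,..,p^2-1}; letter i (0-based) is
   the letter a_{i+1} of the paper. *)
Definition word (p n : nat) := {ffun 'I_n -> 'I_(p ^ 2)}.

(* Membership in W_p^n; indices j,k are 1-based as in the paper. *)
Definition inW (p n : nat) (w : word p n) : bool :=
  [forall i, val (w i) == 0%N] ||
  [exists j : 'I_n.+2, exists k : 'I_n.+2,
     [&& (1 <= j)%N, (j < k)%N,
      [forall i : 'I_n, (i.+1 < j)%N ==> (val (w i) == 0%N)],
      [forall i : 'I_n, (i.+1 == j) ==> (val (w i) == 1%N)],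
      [forall i : 'I_n, ((j < i.+1) && (i.+1 < k))%N ==> (val (w i) < p)%N],
      [forall i : 'I_n, (i.+1 == k) ==>
                  [&& (p %| val (w i))%N, (0 < val (w i))%N & (val (w i) <= (p - 1) * p)%N]] &
      [forall i : 'I_n, (k < i.+1)%N ==> (val (w i) < p ^ 2)%N]]].

Definition W (p n : nat) : {set word p n} := [set w | inW w].

(* (Z_p x Z_p)^n as 2 x n matrices over Z_p (p prime, so 'F_p = Z/pZ). *)
Definition state (p n : nat) := 'M['F_p]_(2, n).

Definition act (p n : nat) (M : 'M[int]_2) (x : state p n) : state p n :=
  map_mx (fun z : int => z%:~R) M *m x.

Definition SL2Z (M : 'M[int]_2) : Prop := \det M = 1.

Definition orbit (p n : nat) (x : state p n) : {set state p n} :=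
  [set y | `[< exists M : 'M[int]_2, SL2Z M /\ act M x = y >]].

Definition orbits (p n : nat) : {set {set state p n}} :=
  [set orbit x | x : state p n].

(* Main.v *)
Require Import Defs.
From HB Require Import structures.
From mathcomp Require Import all_boot all_order all_algebra.
From mathcomp Require Import boolp zify.
Set Implicit Arguments. Unset Strict Implicit. Unset Printing Implicit Defensive.
Import GRing.Theory.
Local Open Scope ring_scope.

Lemma det2 (R : comNzRingType) (A : 'M[R]_2) : \det A = A 0 0 * A 1 1 - A 0 1 * A 1 0.
Proof.
rewrite (expand_det_row _ 0) !big_ord_recl big_ord0 addr0 /cofactor !det_mx11.
rewrite /= !mxE /= expr1 mulN1r mulrN.
rewrite expr0 mul1r.
by congr (_ * A _ _ - A _ _ * A _ _); apply: val_inj.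
Qed.


Lemma actM p n (M N : 'M[int]_2) (x : state p n) : act M (act N x) = act (M *m N) x.
Proof. by rewrite /act mulmxA -(map_mxM intr). Qed.

Lemma act1 p n (x : state p n) : act 1%:M x = x.
Proof. by rewrite /act (map_mx1 intr) mul1mx. Qed.

Lemma orbitP p n (x y : state p n) :
  reflect (exists M, SL2Z M /\ act M x = y) (y \in Defs.orbit x).
Proof. by rewrite inE; apply: (iffP (asboolP _)). Qed.

Lemma orbit_refl p n (x : state p n) : x \in Defs.orbit x.
Proof.
apply/orbitP; exists 1%:M; split; first by rewrite /SL2Z det1.
exact: act1.
Qed.

Lemma orbit_trans p n (x y z : state p n) :
  y \in Defs.orbit x -> z \in Defs.orbit y -> z \in Defs.orbit x.
Proof.
move=> /orbitP[M [dM <-]] /orbitP[N [dN <-]]; apply/orbitP; exists (N *m M).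
by rewrite /SL2Z det_mulmx dM dN mulr1 actM.
Qed.

Lemma orbit_sym p n (x y : state p n) : y \in Defs.orbit x -> x \in Defs.orbit y.
Proof.
move=> /orbitP[M [dM <-]]; apply/orbitP; exists (\adj M); split.
  by rewrite /SL2Z -(mulr1 (\det (\adj M))) -dM -det_mulmx mul_adj_mx dM det1.
by rewrite actM mul_adj_mx dM act1.
Qed.

Lemma orbit_eq p n (x y : state p n) : y \in Defs.orbit x -> Defs.orbit x = Defs.orbit y.
Proof.
move=> yx; apply/setP=> z; apply/idP/idP => H.
  exact: orbit_trans (orbit_sym yx) H.
exact: orbit_trans yx H.
Qed.

Lemma Fp_eq0 p (pp : prime p) a : (a < p)%N -> ((a%:R : 'F_p) == 0) = (a == 0)%N.
Proof. by move=> ap; rewrite -(inj_eq val_inj) /= val_Fp_nat // modn_small. Qed.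

Lemma Fp_eq1 p (pp : prime p) a : (a < p)%N -> ((a%:R : 'F_p) == 1) = (a == 1)%N.
Proof.
move=> ap; rewrite -(inj_eq val_inj) /= val_Fp_nat // modn_small //.
Qed.

Lemma letter_bounds p (pp : prime p) (a : 'I_(p ^ 2)) : (a %% p < p)%N /\ (a %/ p < p)%N.
Proof.
have p0 : (0 < p)%N by rewrite prime_gt0.
by split; [rewrite ltn_mod | rewrite ltn_divLR // mulnn].
Qed.

Lemma letter_nat p (pp : prime p) (a : 'I_(p ^ 2)) :
  [/\ (val a == 0)%N = ((a %% p == 0) && (a %/ p == 0))%N,
      (val a == 1)%N = ((a %% p == 1) && (a %/ p == 0))%N,
      (val a < p)%N = (a %/ p == 0)%N &
      [&& (p %| a)%N, (0 < a)%N & (a <= (p - 1) * p)%N] = ((a %% p == 0) && (a %/ p != 0))%N].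
Proof.
have p1 : (1 < p)%N by rewrite prime_gt1.
have [rb qb] := letter_bounds pp a.
have aE := divn_eq a p.
rewrite /dvdn.
move: aE rb qb; generalize (a %/ p)%N (a %% p)%N => q r aE rb qb.
have aE' : val a = (q * p + r)%N := aE. rewrite aE' aE; clear aE aE'.
case: q qb => [|q] qb; rewrite ?mul0n ?add0n.
all: split; try nia.
Qed.


Definition mat p n (w : word p n) : state p n :=
  \matrix_(r < 2, i < n) (if r == 0 then ((w i) %% p)%N%:R else ((w i) %/ p)%N%:R).

Definition canonm p n (y : state p n) : bool :=
  [forall i, (y 0 i == 0) && (y 1 i == 0)] ||
  [exists j : 'I_n.+2, exists k : 'I_n.+2,
     [&& (1 <= j)%N, (j < k)%N,
      [forall i : 'I_n, (i.+1 < j)%N ==> ((y 0 i == 0) && (y 1 i == 0))],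
      [forall i : 'I_n, (i.+1 == j) ==> ((y 0 i == 1) && (y 1 i == 0))],
      [forall i : 'I_n, ((j < i.+1) && (i.+1 < k))%N ==> (y 1 i == 0)],
      [forall i : 'I_n, (i.+1 == k) ==> ((y 0 i == 0) && (y 1 i != 0))] &
      [forall i : 'I_n, (k < i.+1)%N ==> true]]].

Lemma inW_canon p n (pp : prime p) (w : word p n) : inW w = canonm (mat w).
Proof.
have E0 i : mat w 0 i = ((w i) %% p)%N%:R by rewrite mxE.
have E1 i : mat w 1 i = ((w i) %/ p)%N%:R by rewrite mxE.
have F i := letter_nat pp (w i).
rewrite /inW /canonm; congr orb.
  apply: eq_forallb => i; have [-> _ _ _] := F i.
  by rewrite E0 E1 !Fp_eq0 //; case: (letter_bounds pp (w i)).
apply: eq_existsb => j; apply: eq_existsb => k.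
congr [&& _, _, _, _, _, _ & _].
- apply: eq_forallb => i; have [-> _ _ _] := F i.
  by rewrite E0 E1 !Fp_eq0 //; case: (letter_bounds pp (w i)).
- apply: eq_forallb => i; have [_ -> _ _] := F i.
  by rewrite E0 E1 Fp_eq1 ?Fp_eq0 //; case: (letter_bounds pp (w i)).
- apply: eq_forallb => i; have [_ _ -> _] := F i.
  by rewrite E1 !Fp_eq0 //; case: (letter_bounds pp (w i)).
- apply: eq_forallb => i; have [_ _ _ ->] := F i.
  by rewrite E0 E1 !Fp_eq0 //; case: (letter_bounds pp (w i)).
- by apply: eq_forallb => i; rewrite ltn_ord implybT.
Qed.

Lemma Fp_val_lt p (pp : prime p) (z : 'F_p) : (val z < p)%N.
Proof. by have := ltn_ord z; rewrite [X in (_ < X)%N -> _]Fp_cast. Qed.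

Lemma Fp_natr_val p (pp : prime p) (z : 'F_p) : ((val z)%:R : 'F_p) = z.
Proof. by apply: val_inj; rewrite /= val_Fp_nat // modn_small // Fp_val_lt. Qed.

Lemma mat_inj p n (pp : prime p) (w1 w2 : word p n) : mat w1 = mat w2 -> w1 = w2.
Proof.
move=> E; apply/ffunP => i; apply: val_inj.
have := congr1 (fun m : state p n => val (m 0 i)) E.
have := congr1 (fun m : state p n => val (m 1 i)) E.
rewrite /= !mxE /= !val_Fp_nat // !modn_mod.
have [r1 q1] := letter_bounds pp (w1 i); have [r2 q2] := letter_bounds pp (w2 i).
rewrite !(modn_small q1) !(modn_small q2) => Eq Er.
by rewrite (divn_eq (w1 i) p) (divn_eq (w2 i) p) Eq Er.
Qed.

Lemma mat_surj p n (pp : prime p) (y : state p n) : exists w : word p n, mat w = y.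
Proof.
have p0 : (0 < p)%N by rewrite prime_gt0.
have H (i : 'I_n) : (val (y 0%R i) + val (y 1%R i) * p < p ^ 2)%N.
  have := Fp_val_lt pp (y 0 i); have := Fp_val_lt pp (y 1 i).
  move: (val (y 0 i)) (val (y 1 i)) => a b; rewrite -mulnn; nia.
exists [ffun i => Ordinal (H i)]; apply/matrixP => r i; rewrite mxE ffunE /=.
have a0 := Fp_val_lt pp (y 0 i).
case: ifP => [/eqP -> | r0].
  by rewrite addnC modnMDl modn_small // Fp_natr_val.
have -> : r = 1 by apply/val_inj; case: r r0 => [[|[|]]] //.
by rewrite addnC divnMDl // divn_small // addn0 Fp_natr_val.
Qed.

Definition colz p n (y : state p n) i := (y 0 i == 0) && (y 1 i == 0).

Definition P1 p n (y : state p n) := forall i : 'I_n,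
  (forall i' : 'I_n, (i' < i)%N -> colz y i') -> ~~ colz y i -> y 0 i = 1 /\ y 1 i = 0.
Definition P2 p n (y : state p n) := forall i : 'I_n,
  (forall i' : 'I_n, (i' < i)%N -> y 1 i' = 0) -> y 1 i != 0 -> y 0 i = 0.

Lemma canon_P p n (y : state p n) : canonm y -> P1 y /\ P2 y.
Proof.
case/orP => [/forallP allz | /existsP[j /existsP[k /and5P[j1 jk /forallP H3 /forallP H4 /and3P[/forallP H5 /forallP H6 _]]]]].
  split => i _ nz; first by rewrite /colz allz in nz.
  by have /andP[_ /eqP E] := allz i; rewrite E eqxx in nz.
split => i pre nz; have ilt := ltn_ord i.
- rewrite /colz in nz pre; case: (ltngtP i.+1 j) => c.
  + by rewrite (implyP (H3 i) c) in nz.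
  + have lt : (j.-1 < n)%N by lia.
    have := pre (Ordinal lt) ltac:(rewrite /=; lia).
    by rewrite /colz; have /andP[/eqP -> _] := implyP (H4 (Ordinal lt)) ltac:(rewrite /=; lia); rewrite oner_eq0.
  + by have /andP[/eqP -> /eqP ->] := implyP (H4 i) ltac:(by rewrite c).
- case: (ltngtP i.+1 k) => c.
  + case: (ltngtP i.+1 j) => c'.
    * by have /andP[_ /eqP E] := implyP (H3 i) c'; rewrite E eqxx in nz.
    * by have /eqP E := implyP (H5 i) ltac:(by rewrite c c'); rewrite E eqxx in nz.
    * by have /andP[_ /eqP E] := implyP (H4 i) ltac:(by rewrite c'); rewrite E eqxx in nz.
  + have lt : (k.-1 < n)%N by lia.
    have E := pre (Ordinal lt) ltac:(rewrite /=; lia).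
    have /andP[_] := implyP (H6 (Ordinal lt)) ltac:(rewrite /=; lia).
    by rewrite E eqxx.
  + by have /andP[/eqP -> _] := implyP (H6 i) ltac:(by rewrite c).
Qed.

Lemma mul2E p n (A : 'M['F_p]_2) (y : state p n) r i :
  (A *m y) r i = A r 0 * y 0 i + A r 1 * y 1 i.
Proof.
rewrite mxE !big_ord_recl big_ord0 addr0.
by congr (A r _ * y _ i + A r _ * y _ i); apply: val_inj.
Qed.

Lemma canon_uniq p n (pp : prime p) (A : 'M['F_p]_2) (y y' : state p n) :
  \det A = 1 -> P1 y -> P2 y -> P1 y' -> P2 y' -> A *m y = y' -> y = y'.
Proof.
move=> dA P1y P2y P1y' P2y' Ey.
have Ey' : \adj A *m y' = y by rewrite -Ey mulmxA mul_adj_mx dA mul1mx.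
have col r i : y' r i = A r 0 * y 0 i + A r 1 * y 1 i by rewrite -Ey mul2E.
have col' r i : y r i = \adj A r 0 * y' 0 i + \adj A r 1 * y' 1 i by rewrite -Ey' mul2E.
have row2 (r : 'I_2) : r = 0 \/ r = 1.
  case: r => [[|[|m]] H] //; [left|right]; exact: val_inj.
case: (pickP (fun i => ~~ colz y i)) => [i0 Hi0 | allz].
  case: (arg_minnP (P := fun i => ~~ colz y i) (fun i : 'I_n => val i) Hi0) => i nzi imin.
  have pre (i' : 'I_n) : (i' < i)%N -> colz y i'.
    by move=> lt; apply: contraLR lt => /imin; rewrite -leqNgt.
  have pre' (i' : 'I_n) : (i' < i)%N -> colz y' i'.
    move=> /pre /andP[/eqP a /eqP b].
    by rewrite /colz !col a b !mulr0 addr0 eqxx.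
  have nzi' : ~~ colz y' i.
    apply: contra nzi => /andP[/eqP a /eqP b].
    by rewrite /colz !col' a b !mulr0 addr0 eqxx.
  have [a0 a1] := P1y i pre nzi.
  have [b0 b1] := P1y' i pre' nzi'.
  have A00 : A 0 0 = 1 by move: b0; rewrite col a0 a1 mulr0 addr0 mulr1.
  have A10 : A 1 0 = 0 by move: b1; rewrite col a0 a1 mulr0 addr0 mulr1.
  have A11 : A 1 1 = 1 by move: dA; rewrite det2 A00 A10 mulr0 subr0 mul1r.
  have r1 l : y' 1 l = y 1 l by rewrite col A10 A11 mul0r add0r mul1r.
  have r0 l : y' 0 l = y 0 l + A 0 1 * y 1 l by rewrite col A00 mul1r.
  suff A01 : forall l, A 0 1 * y 1 l = 0.
    apply/matrixP => r l; case: (row2 r) => ->; last by rewrite r1.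
    by rewrite r0 A01 addr0.
  move=> l1.
  case: (pickP (fun i => y 1 i != 0)) => [l0 Hl0 | allz1]; last first.
    by move: (allz1 l1) => /negbFE /eqP ->; rewrite mulr0.
  suff -> : A 0 1 = 0 by rewrite mul0r.
  case: (arg_minnP (P := fun i => y 1 i != 0) (fun i : 'I_n => val i) Hl0) => l nzl lmin.
  have preL (l' : 'I_n) : (l' < l)%N -> y 1 l' = 0.
    by move=> lt; apply/eqP; apply: contraLR lt => /lmin; rewrite -leqNgt.
  have preL' (l' : 'I_n) : (l' < l)%N -> y' 1 l' = 0 by move=> /preL; rewrite r1.
  have c0 := P2y l preL nzl.
  have c0' := P2y' l preL' ltac:(by rewrite r1).
  move: c0'; rewrite r0 c0 add0r => /eqP; rewrite mulf_eq0 (negbTE nzl) orbF.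
  by move/eqP.
have z r i : y r i = 0.
  move: (allz i); rewrite /colz => /negbFE /andP[/eqP a /eqP b].
  by case: (row2 r) => ->.
by apply/matrixP => r i; rewrite col !z !mulr0 addr0.
Qed.

Definition Emx (t : int) : 'M[int]_2 :=
  \matrix_(r, c) (if (r == 0) && (c == 1) then t else (r == c)%:R).
Definition Fmx (t : int) : 'M[int]_2 :=
  \matrix_(r, c) (if (r == 1) && (c == 0) then t else (r == c)%:R).

Lemma Fp_intr p (pp : prime p) (t : 'F_p) : (((val t)%:Z)%:~R : 'F_p) = t.
Proof. by rewrite -[LHS]/((val t)%:R) Fp_natr_val. Qed.

Lemma orbitE p n (pp : prime p) (x : state p n) (t : 'F_p) :
  exists2 z, z \in Defs.orbit x & forall i, z 0 i = x 0 i + t * x 1 i /\ z 1 i = x 1 i.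
Proof.
exists (act (Emx (val t)%:Z) x).
  apply/orbitP; exists (Emx (val t)%:Z); split => //.
  by rewrite /SL2Z det2 !mxE /= mulr1 mulr0 subr0.
move=> i; rewrite /act !mul2E !mxE /= (Fp_intr pp).
by rewrite !mulr1z !mulr0z !mul1r mul0r add0r.
Qed.

Lemma orbitF p n (pp : prime p) (x : state p n) (t : 'F_p) :
  exists2 z, z \in Defs.orbit x & forall i, z 0 i = x 0 i /\ z 1 i = x 1 i + t * x 0 i.
Proof.
exists (act (Fmx (val t)%:Z) x).
  apply/orbitP; exists (Fmx (val t)%:Z); split => //.
  by rewrite /SL2Z det2 !mxE /= mulr1 mul0r subr0.
move=> i; rewrite /act !mul2E !mxE /= (Fp_intr pp).
by rewrite !mulr1z !mulr0z !mul1r mul0r addr0 addrC.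
Qed.

Lemma canon_intro p n (y : state p n) (i : 'I_n) (k0 : nat) :
  (i < k0)%N -> (k0 <= n)%N ->
  (forall i' : 'I_n, (i' < i)%N -> colz y i') ->
  y 0 i = 1 -> y 1 i = 0 ->
  (forall i' : 'I_n, (i < i')%N -> (i' < k0)%N -> y 1 i' = 0) ->
  (forall i' : 'I_n, val i' = k0 -> y 0 i' = 0 /\ y 1 i' != 0) ->
  canonm y.
Proof.
move=> ik kn pre e0 e1 mid last.
apply/orP; right; apply/existsP; exists (Ordinal (ltnW (ltn_ord i) : (i.+1 < n.+2)%N)).
apply/existsP; exists (Ordinal (kn : (k0.+1 < n.+2)%N)) => /=.
rewrite ltnS ik /=; apply/and5P; split.
- by apply/forallP => i'; apply/implyP => lt; apply: pre.
- apply/forallP => i'; apply/implyP => /eqP [/val_inj ->].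
  by rewrite e0 e1 !eqxx.
- apply/forallP => i'; apply/implyP => /andP[a b]; apply/eqP; apply: mid; lia.
- apply/forallP => i'; apply/implyP => /eqP [E].
  by have [-> ->] := last i' E; rewrite eqxx.
- by apply/forallP => i'; rewrite implybT.
Qed.

Lemma exists_canon p n (pp : prime p) (x : state p n) :
  exists2 y, y \in Defs.orbit x & canonm y.
Proof.
case: (pickP (fun i => ~~ colz x i)) => [i0 Hi0 | allz]; last first.
  exists x; first exact: orbit_refl.
  by apply/orP; left; apply/forallP => i; move: (allz i) => /negbFE.
case: (arg_minnP (P := fun i => ~~ colz x i) (fun i : 'I_n => val i) Hi0) => i nzi imin.
have pre (i' : 'I_n) : (i' < i)%N -> colz x i'.
  by move=> lt; apply: contraLR lt => /imin; rewrite -leqNgt.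
have [y yx [ypre ynz]] : exists2 y, y \in Defs.orbit x &
    (forall i' : 'I_n, (i' < i)%N -> colz y i') /\ y 1 i != 0.
  case: (eqVneq (x 1 i) 0) => [x1 | x1]; last by exists x; [exact: orbit_refl|].
  have [z zx zE] := orbitF pp x 1.
  exists z => //; split.
    move=> i' /pre /andP[/eqP a /eqP b]; have [c d] := zE i'.
    by rewrite /colz c d a b mulr0 addr0 eqxx.
  have [_ d] := zE i; rewrite d x1 add0r mul1r.
  by move: nzi; rewrite /colz x1 eqxx andbT.
have [z zy zE] := orbitE pp y ((1 - y 0 i) / y 1 i).
have [u uz uE] := orbitF pp z (- z 1 i).
have ux : u \in Defs.orbit x by apply: orbit_trans yx (orbit_trans zy uz).
have zpre (i' : 'I_n) : (i' < i)%N -> colz z i'.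
  move=> /ypre /andP[/eqP a /eqP b]; have [c d] := zE i'.
  by rewrite /colz c d a b mulr0 addr0 eqxx.
have upre (i' : 'I_n) : (i' < i)%N -> colz u i'.
  move=> /zpre /andP[/eqP a /eqP b]; have [c d] := uE i'.
  by rewrite /colz c d a b mulr0 addr0 eqxx.
have z0 : z 0 i = 1.
  by have [-> _] := zE i; rewrite divfK // addrC subrK.
have u0 : u 0 i = 1 by have [-> _] := uE i.
have u1 : u 1 i = 0 by have [_ ->] := uE i; rewrite z0 mulr1 subrr.
case: (pickP (fun l => u 1 l != 0)) => [l0 Hl0 | allz1]; last first.
  exists u => //; apply: (canon_intro (k0 := n) (i := i)) => //.
  - by move=> i' _ _; apply/eqP; move: (allz1 i') => /negbFE.
  - by move=> i' E; have := ltn_ord i'; rewrite E ltnn.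
case: (arg_minnP (P := fun l => u 1 l != 0) (fun i : 'I_n => val i) Hl0) => l nzl lmin.
have il : (i < l)%N.
  case: (ltngtP i l) => // c.
    by move: (upre l c) => /andP[_]; rewrite (negbTE nzl).
  by move: nzl; rewrite (_ : l = i) ?u1 ?eqxx //; apply: val_inj.
have [v vu vE] := orbitE pp u (- (u 0 l / u 1 l)).
exists v; first by apply: orbit_trans ux vu.
apply: (canon_intro (k0 := l) (i := i)) => //.
- exact: ltnW (ltn_ord l).
- move=> i' /upre /andP[/eqP a /eqP b]; have [c d] := vE i'.
  by rewrite /colz c d a b mulr0 addr0 eqxx.
- by have [-> _] := vE i; rewrite u0 u1 mulr0 addr0.
- by have [_ ->] := vE i.
- move=> i' a b; have [_ ->] := vE i'; apply/eqP.
  by apply: contraLR b => /lmin; rewrite -leqNgt.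
- move=> i' E; have -> : i' = l by apply: val_inj.
  have [-> ->] := vE l; split => //.
  by rewrite mulNr divfK // subrr.
Qed.

Local Close Scope ring_scope.

Theorem theorem3p1 (p n : nat) :
  prime p -> (1 <= n)%N ->
  exists f : word p n -> {set state p n},
    {in W p n &, injective f} /\ f @: W p n = orbits p n.
Proof.
move=> pp _; exists (fun w => Defs.orbit (mat w)); split.
  move=> w1 w2; rewrite !inE !(inW_canon pp) => /canon_P [A1 A2] /canon_P [B1 B2] E.
  have : mat w2 \in Defs.orbit (mat w1) by rewrite E; apply: orbit_refl.
  case/orbitP => M [dM]; rewrite /act => EM.
  apply: (mat_inj pp); apply: (canon_uniq pp _ A1 A2 B1 B2 EM).
  by rewrite (det_map_mx (intr : int -> 'F_p)) dM.
apply/setP => S; apply/imsetP/imsetP => [[w wW ->] | [x _ ->]].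
  by exists (mat w).
have [y yx cy] := exists_canon pp x.
have [w wE] := mat_surj pp y.
exists w; first by rewrite inE (inW_canon pp) wE.
by rewrite wE (orbit_eq yx).
Qed.
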